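(* Let $\mathbf{x}:[-1,1]^2\to\mathbb{R}^2$, $\mathbf{x}(\xi,\eta)=(x(\xi,\eta),y(\xi,\eta))$, be a $C^1$ map whose Jacobian $\mathbf{J}=\begin{bmatrix} x_\xi & x_\eta\\ y_\xi & y_\eta\end{bmatrix}$ is nonsingular on the edge $\{\xi=1\}$ (including the corners $(1,\pm1)$). Let $F(-1,\cdot)$, $F(\cdot,-1)$, $F(\cdot,1)$ be given differentiable functions on $[-1,1]$ (transformed Dirichlet data on the edges $\xi=-1$, $\eta=-1$, $\eta=1$), agreeing at the corners $(-1,\pm1)$; let $\alpha_{BC}$ be a constant and $u_{rBC}$ a given function on the image of the edge $\xi=1$ (Robin data). Define $S_{BC},W_{BC},T_{rBC},\lambda_B,\lambda_C,F^a_\eta(1,\pm1)$, the polynomials $\varphi_0,\varphi_1,\psi_0,\psi_1$ and the operators $Pg$, $F^g_\xi(1,\eta)$, $PF^g$ as in the context. Assume: if $\lambda_B=0$ then $F_\xi(1,-1)+\alpha_{BC}W_{BC}(-1)F(1,-1)-T_{rBC}(-1)=0$, and if $\lambda_C=0$ then $F_\xi(1,1)+\alpha_{BC}W_{BC}(1)F(1,1)-T_{rBC}(1)=0$. Then for every sufficiently differentiable $g:[-1,1]^2\to\mathbb{R}$, the function $V=g-Pg+PF^g$ satisfies, for all $\xi,\eta\in[-1,1]$, $V(\xi,-1)=F(\xi,-1)$, $V(\xi,1)=F(\xi,1)$, $V(-1,\eta)=F(-1,\eta)$, and $$V_\xi(1,\eta)+S_{BC}(\eta)V_\eta(1,\e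ta)+\alpha_{BC}W_{BC}(\eta)V(1,\eta)=T_{rBC}(\eta).$$
   Context: Setting: a curved quadrilateral $ABCD$ is the image of $[-1,1]^2$ under $\mathbf{x}$, with $A=\mathbf{x}(-1,-1)$, $B=\mathbf{x}(1,-1)$, $C=\mathbf{x}(1,1)$, $D=\mathbf{x}(-1,1)$; edges $AB:\eta=-1$, $BC:\xi=1$, $CD:\eta=1$, $AD:\xi=-1$. A field $u$ is represented as $V(\xi,\eta)=u(\mathbf{x}(\xi,\eta))$; the Robin condition $\mathbf n\cdot\nabla u+\alpha_{BC}u=u_{rBC}$ on $BC$ becomes the displayed condition on $V$. Notation: $F(1,-1):=F(\xi,-1)|_{\xi=1}$, $F(1,1):=F(\xi,1)|_{\xi=1}$, $F_\xi(1,\pm1):=\frac{d}{d\xi}F(\xi,\pm1)|_{\xi=1}$. Definitions: $K_{xBC}(\eta)=\frac{\|\mathbf{x}_\eta(1,\eta)\|}{\det\mathbf{J}(1,\eta)}$, $K_{yBC}(\eta)=-\frac{\mathbf{x}_\xi(1,\eta)\cdot\mathbf{x}_\eta(1,\eta)}{\|\mathbf{x}_\eta(1,\eta)\|\det\mathbf{J}(1,\eta)}$, $S_{BC}=K_{yBC}/K_{xBC}$, $W_{BC}=1/K_{xBC}$, $T_{rBC}(\eta)=u_{rBC}(\mathbf{x}(1,\eta))W_{BC}(\eta)$. Flags: $\lambda_B=0$ if $\mathbf{x}_\xi(1,-1)\cdot\mathbf{x}_\eta(1,-1)=0$, else $1$; $\lambda_C=0$ if $\mathbf{x}_\xi(1,1)\cdot\mathbf{x}_\eta(1,1)=0$,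 else $1$. When $\lambda_B=1$: $F^a_\eta(1,-1)=\frac{T_{rBC}(-1)-F_\xi(1,-1)-\alpha_{BC}W_{BC}(-1)F(1,-1)}{S_{BC}(-1)}$; when $\lambda_C=1$: $F^a_\eta(1,1)=\frac{T_{rBC}(1)-F_\xi(1,1)-\alpha_{BC}W_{BC}(1)F(1,1)}{S_{BC}(1)}$. Any term multiplied by a flag equal to $0$ is taken to be $0$. Polynomials: $\phi_0(t)=\tfrac12(1-t)$, $\phi_1(t)=\tfrac12(1+t)$; $\varphi_0=\phi_0^2(1+2\phi_1)$, $\varphi_1=\phi_1^2(1+2\phi_0)$, $\psi_0=2\phi_0^2\phi_1$, $\psi_1=-2\phi_0\phi_1^2$. $Pg(\xi,\eta)=g(-1,\eta)\varphi_0(\xi)+g_\xi(1,\eta)\psi_1(\xi)+g(\xi,-1)\varphi_0(\eta)+g(\xi,1)\varphi_1(\eta)-[g(-1,-1)\varphi_0(\eta)+g(-1,1)\varphi_1(\eta)]\varphi_0(\xi)-[g_\xi(1,-1)\varphi_0(\eta)+g_\xi(1,1)\varphi_1(\eta)]\psi_1(\xi)+[\lambda_Bg_\eta(1,-1)\psi_0(\eta)+\lambda_Cg_\eta(1,1)\psi_1(\eta)]\varphi_1(\xi)$. $F^g_\xi(1,\eta)=T_{rBC}(\eta)-S_{BC}(\eta)\{g_\eta(1,\eta)-[g(1,-1)-F(1,-1)]\varphi_0'(\eta)-[g(1,1)-F(1,1)]\varphi_1'(\eta)-\lambda_B[g_\eta(1,-1)-F^a_\eta(1,-1)]\psi_0'(\eta)-\lambda_C[g_\eta(1,1)-F^a_\eta(1,1)]\psi_1'(\eta)\}-\alpha_{BC}W_{BC}(\eta)\{g(1,\eta)-[g(1,-1)-F(1,-1)]\varphi_0(\eta)-[g(1,1)-F(1,1)]\varphi_1(\eta)-\lambda_B[g_\eta(1,-1)-F^a_\eta(1,-1)]\psi_0(\eta)-\lambda_C[g_\eta(1,1)-F^a_\eta(1,1)]\psi_1(\eta)\}$.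 $PF^g(\xi,\eta)=F(-1,\eta)\varphi_0(\xi)+F^g_\xi(1,\eta)\psi_1(\xi)+F(\xi,-1)\varphi_0(\eta)+F(\xi,1)\varphi_1(\eta)-[F(-1,-1)\varphi_0(\eta)+F(-1,1)\varphi_1(\eta)]\varphi_0(\xi)-[F_\xi(1,-1)\varphi_0(\eta)+F_\xi(1,1)\varphi_1(\eta)]\psi_1(\xi)+[\lambda_BF^a_\eta(1,-1)\psi_0(\eta)+\lambda_CF^a_\eta(1,1)\psi_1(\eta)]\varphi_1(\xi)$. *)

(* Defs.v *)
From Stdlib Require Import Reals Lra.
From Coquelicot Require Import Coquelicot.
Open Scope R_scope.

Definition pxi (f : R -> R -> R) (a b : R) : R := Derive (fun t => f t b) a.
Definition peta (f : R -> R -> R) (a b : R) : R := Derive (fun t => f a t) b.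

Definition phi0 (t : R) : R := (1 - t) / 2.
Definition phi1 (t : R) : R := (1 + t) / 2.
Definition vphi0 (t : R) : R := phi0 t ^ 2 * (1 + 2 * phi1 t).
Definition vphi1 (t : R) : R := phi1 t ^ 2 * (1 + 2 * phi0 t).
Definition psi0 (t : R) : R := 2 * phi0 t ^ 2 * phi1 t.
Definition psi1 (t : R) : R := - 2 * phi0 t * phi1 t ^ 2.

Section Construction.
Variables (x y : R -> R -> R).
(* Robin coefficient and Robin data u_rBC (a function on R^2) *)
Variables (alpha : R) (u : R -> R -> R).
(* Dirichlet data: Fl = F(-1,.), Fb = F(.,-1), Ft = F(.,1) *)
Variables (Fl Fb Ft : R -> R).

Definition detJ (a b : R) : R := pxi x a b * peta y a b - peta x a b * pxi y a b.
Definition norm_xeta (b : R) : R := sqrt (peta x 1 b ^ 2 + peta y 1 b ^ 2).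
Definition dot_xixeta (b : R) : R := pxi x 1 b * peta x 1 b + pxi y 1 b * peta y 1 b.

Definition KxBC (b : R) : R := norm_xeta b / detJ 1 b.
Definition KyBC (b : R) : R := - (dot_xixeta b / (norm_xeta b * detJ 1 b)).
Definition SBC (b : R) : R := KyBC b / KxBC b.
Definition WBC (b : R) : R := / KxBC b.
Definition TrBC (b : R) : R := u (x 1 b) (y 1 b) * WBC b.

Definition lamB : R := if Req_EM_T (dot_xixeta (-1)) 0 then 0 else 1.
Definition lamC : R := if Req_EM_T (dot_xixeta 1) 0 then 0 else 1.

(* F(1,-1) = Fb 1, F(1,1) = Ft 1, F_xi(1,-1) = Fb'(1), F_xi(1,1) = Ft'(1) *)
Definition FaB : R :=
  (TrBC (-1) - Derive Fb 1 - alpha * WBC (-1) * Fb 1) / SBC (-1).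
Definition FaC : R :=
  (TrBC 1 - Derive Ft 1 - alpha * WBC 1 * Ft 1) / SBC 1.

Definition Pg (g : R -> R -> R) (a b : R) : R :=
  g (-1) b * vphi0 a + pxi g 1 b * psi1 a
  + g a (-1) * vphi0 b + g a 1 * vphi1 b
  - (g (-1) (-1) * vphi0 b + g (-1) 1 * vphi1 b) * vphi0 a
  - (pxi g 1 (-1) * vphi0 b + pxi g 1 1 * vphi1 b) * psi1 a
  + (lamB * peta g 1 (-1) * psi0 b + lamC * peta g 1 1 * psi1 b) * vphi1 a.

Definition Fgxi (g : R -> R -> R) (b : R) : R :=
  TrBC b
  - SBC b * (peta g 1 b
             - (g 1 (-1) - Fb 1) * Derive vphi0 b
             - (g 1 1 - Ft 1) * Derive vphi1 b
             - lamB * (peta g 1 (-1) - FaB) * Derive psi0 b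
             - lamC * (peta g 1 1 - FaC) * Derive psi1 b)
  - alpha * WBC b * (g 1 b
             - (g 1 (-1) - Fb 1) * vphi0 b
             - (g 1 1 - Ft 1) * vphi1 b
             - lamB * (peta g 1 (-1) - FaB) * psi0 b
             - lamC * (peta g 1 1 - FaC) * psi1 b).

(* F(-1,-1) := Fl(-1), F(-1,1) := Fl 1 (equal to Fb(-1), Ft(-1) by corner
   compatibility). *)
Definition PFg (g : R -> R -> R) (a b : R) : R :=
  Fl b * vphi0 a + Fgxi g b * psi1 a
  + Fb a * vphi0 b + Ft a * vphi1 b
  - (Fl (-1) * vphi0 b + Fl 1 * vphi1 b) * vphi0 a
  - (Derive Fb 1 * vphi0 b + Derive Ft 1 * vphi1 b) * psi1 a
  + (lamB * FaB * psi0 b + lamC * FaC * psi1 b) * vphi1 a.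

Definition Vsol (g : R -> R -> R) (a b : R) : R := g a b - Pg g a b + PFg g a b.

End Construction.

Definition C1_2d (f : R -> R -> R) : Prop :=
  (forall a b, ex_derive (fun t => f t b) a /\ ex_derive (fun t => f a t) b) /\
  (forall p : R * R,
      continuous (fun q : R * R => pxi f (fst q) (snd q)) p /\
      continuous (fun q : R * R => peta f (fst q) (snd q)) p).

(* Main.v *)
Require Import Defs.
From Stdlib Require Import Reals Lra.
From Coquelicot Require Import Coquelicot.
Open Scope R_scope.

Lemma ex_vphi0 t : ex_derive vphi0 t.
Proof. unfold vphi0, phi0, phi1; auto_derive; auto. Qed.
Lemma ex_vphi1 t : ex_derive vphi1 t.
Proof. unfold vphi1, phi0, phi1; auto_derive; auto. Qed.
Lemma ex_psi0 t : ex_derive psi0 t.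
Proof. unfold psi0, phi0, phi1; auto_derive; auto. Qed.
Lemma ex_psi1 t : ex_derive psi1 t.
Proof. unfold psi1, phi0, phi1; auto_derive; auto. Qed.

Lemma D_vphi0 t : Derive vphi0 t = - 3 * (1 - t ^ 2) / 4.
Proof. apply is_derive_unique; unfold vphi0, phi0, phi1; auto_derive; auto; field. Qed.
Lemma D_vphi1 t : Derive vphi1 t = 3 * (1 - t ^ 2) / 4.
Proof. apply is_derive_unique; unfold vphi1, phi0, phi1; auto_derive; auto; field. Qed.
Lemma D_psi0 t : Derive psi0 t = (1 - t) * (-1 - 3 * t) / 4.
Proof. apply is_derive_unique; unfold psi0, phi0, phi1; auto_derive; auto; field. Qed.
Lemma D_psi1 t : Derive psi1 t = - (1 + t) * (1 - 3 * t) / 4.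
Proof. apply is_derive_unique; unfold psi1, phi0, phi1; auto_derive; auto; field. Qed.

Lemma dvals : Derive vphi0 1 = 0 /\ Derive vphi1 1 = 0 /\ Derive psi1 1 = 1.
Proof. rewrite D_vphi0, D_vphi1, D_psi1; repeat split; field. Qed.

Lemma vals :
  vphi0 1 = 0 /\ vphi1 1 = 1 /\ psi0 1 = 0 /\ psi1 1 = 0 /\
  vphi0 (-1) = 1 /\ vphi1 (-1) = 0 /\ psi0 (-1) = 0 /\ psi1 (-1) = 0.
Proof. unfold vphi0, vphi1, psi0, psi1, phi0, phi1; repeat split; field. Qed.

Theorem mainTheorem3
  (x y : R -> R -> R) (alpha : R) (u : R -> R -> R) (Fl Fb Ft : R -> R) :
  C1_2d x -> C1_2d y ->
  (forall b, -1 <= b <= 1 -> detJ x y 1 b <> 0) ->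
  (forall t, ex_derive Fl t) -> (forall t, ex_derive Fb t) ->
  (forall t, ex_derive Ft t) ->
  Fl (-1) = Fb (-1) -> Fl 1 = Ft (-1) ->
  (lamB x y = 0 ->
     Derive Fb 1 + alpha * WBC x y (-1) * Fb 1 - TrBC x y u (-1) = 0) ->
  (lamC x y = 0 ->
     Derive Ft 1 + alpha * WBC x y 1 * Ft 1 - TrBC x y u 1 = 0) ->
  forall g : R -> R -> R, C1_2d g ->
  forall a b : R, -1 <= a <= 1 -> -1 <= b <= 1 ->
    let V := Vsol x y alpha u Fl Fb Ft g in
    V a (-1) = Fb a /\ V a 1 = Ft a /\ V (-1) b = Fl b /\
    pxi V 1 b + SBC x y b * peta V 1 b + alpha * WBC x y b * V 1 b
      = TrBC x y u b.
Proof.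
intros Cx Cy Hdet HFl HFb HFt Hc1 Hc2 HB HC g Cg a b Ha Hb V.
destruct Cg as [Hg _].
destruct vals as (v01 & v11 & p01 & p11 & v0m & v1m & p0m & p1m).
assert (Hnz : forall c, dot_xixeta x y c <> 0 -> detJ x y 1 c <> 0 -> SBC x y c <> 0).
{ intros c Hd Hj. unfold SBC, KyBC, KxBC.
  assert (Hn : norm_xeta x y c <> 0).
  { unfold norm_xeta. intro H0. apply Hd. unfold dot_xixeta.
    assert (Hs : peta x 1 c ^ 2 + peta y 1 c ^ 2 = 0).
    { apply sqrt_eq_0; auto. nra. }
    assert (peta x 1 c = 0) by nra. assert (peta y 1 c = 0) by nra.
    rewrite H, H1; ring. }
  intro H0. unfold Rdiv in H0. apply Rmult_integral in H0 as [H0|H0].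
  - apply Hd. apply Ropp_eq_0_compat in H0. rewrite Ropp_involutive in H0.
    apply Rmult_integral in H0 as [H0|H0]; auto.
    exfalso; revert H0; apply Rinv_neq_0_compat. now apply Rmult_integral_contrapositive.
  - revert H0; apply Rinv_neq_0_compat. apply Rmult_integral_contrapositive; split; auto.
    now apply Rinv_neq_0_compat. }
assert (Fm : Fgxi x y alpha u Fb Ft g (-1) = Derive Fb 1).
{ unfold Fgxi. rewrite !D_vphi0, !D_vphi1, !D_psi0, !D_psi1, v0m, v1m, p0m, p1m.
  unfold lamB. destruct (Req_EM_T (dot_xixeta x y (-1)) 0) as [e|n].
  - assert (S0 : SBC x y (-1) = 0).
    { unfold SBC, KyBC. rewrite e. unfold Rdiv. ring. }
    rewrite S0. assert (lamB x y = 0) by (unfold lamB; destruct Req_EM_T; tauto).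
    specialize (HB H). replace (Derive Fb 1) with (TrBC x y u (-1) - alpha * WBC x y (-1) * Fb 1) by lra. ring.
  - assert (Hs := Hnz _ n (Hdet (-1) ltac:(lra))). unfold FaB. field. auto. }
assert (Fp : Fgxi x y alpha u Fb Ft g 1 = Derive Ft 1).
{ unfold Fgxi. rewrite !D_vphi0, !D_vphi1, !D_psi0, !D_psi1, v01, v11, p01, p11.
  unfold lamC. destruct (Req_EM_T (dot_xixeta x y 1) 0) as [e|n].
  - assert (S0 : SBC x y 1 = 0).
    { unfold SBC, KyBC. rewrite e. unfold Rdiv. ring. }
    rewrite S0. assert (lamC x y = 0) by (unfold lamC; destruct Req_EM_T; tauto).
    specialize (HC H). replace (Derive Ft 1) with (TrBC x y u 1 - alpha * WBC x y 1 * Ft 1) by lra. ring.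
  - assert (Hs := Hnz _ n (Hdet 1 ltac:(lra))). unfold FaC. field. auto. }
split; [|split; [|split]].
- unfold V, Vsol, Pg, PFg. rewrite Fm, v0m, v1m, p0m, p1m. ring.
- unfold V, Vsol, Pg, PFg. rewrite Fp, v01, v11, p01, p11. ring.
- unfold V, Vsol, Pg, PFg. destruct vals as (_&_&_&_&w0&w1&_&q1).
  rewrite w0, w1, q1, Hc1, Hc2. ring.
- set (Bt := fun t => g 1 t
             - (g 1 (-1) - Fb 1) * vphi0 t
             - (g 1 1 - Ft 1) * vphi1 t
             - lamB x y * (peta g 1 (-1) - FaB x y alpha u Fb) * psi0 t
             - lamC x y * (peta g 1 1 - FaC x y alpha u Ft) * psi1 t).
  assert (HV : forall t, V 1 t = Bt t).
  { intro t. unfold V, Vsol, Pg, PFg, Bt. rewrite v01, v11, p11. ring. }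
  assert (HX : pxi V 1 b = Fgxi x y alpha u Fb Ft g b).
  { unfold pxi. apply is_derive_unique. unfold V, Vsol, Pg, PFg.
    auto_derive.
    - repeat split; solve [ exact (proj1 (Hg _ _)) | exact (proj2 (Hg _ _)) | apply HFb | apply HFt | apply HFl | apply ex_vphi0 | apply ex_vphi1 | apply ex_psi0 | apply ex_psi1 ].
    - rewrite D_vphi0, D_vphi1, D_psi1. unfold pxi. clear HV Bt V. 
      replace (-3 * (1 - 1 ^ 2) / 4) with 0 by field.
      replace (3 * (1 - 1 ^ 2) / 4) with 0 by field.
      replace (- (1 + 1) * (1 - 3 * 1) / 4) with 1 by field.
      change (Derive (fun x0 : R => Fb x0) 1) with (Derive Fb 1).
      change (Derive (fun x0 : R => Ft x0) 1) with (Derive Ft 1). ring. }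
  assert (HE : peta V 1 b = Derive (fun t => g 1 t) b
             - (g 1 (-1) - Fb 1) * Derive vphi0 b
             - (g 1 1 - Ft 1) * Derive vphi1 b
             - lamB x y * (peta g 1 (-1) - FaB x y alpha u Fb) * Derive psi0 b
             - lamC x y * (peta g 1 1 - FaC x y alpha u Ft) * Derive psi1 b).
  { unfold peta at 1. rewrite (Derive_ext _ _ _ HV). apply is_derive_unique. unfold Bt.
    auto_derive.
    - repeat split; solve [ exact (proj1 (Hg _ _)) | exact (proj2 (Hg _ _)) | apply HFb | apply HFt | apply HFl | apply ex_vphi0 | apply ex_vphi1 | apply ex_psi0 | apply ex_psi1 ].
    - change (Derive (fun x0 : R => vphi0 x0) b) with (Derive vphi0 b).
      change (Derive (fun x0 : R => vphi1 x0) b) with (Derive vphi1 b).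
      change (Derive (fun x0 : R => psi0 x0) b) with (Derive psi0 b).
      change (Derive (fun x0 : R => psi1 x0) b) with (Derive psi1 b). ring. }
  rewrite HX, HE, HV. unfold Fgxi, Bt, peta. ring.
Qed.
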